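(* There exist a transition system $\mathcal T$, an information source $\sigma_h$, and a dynamic heuristic $h$ over $\sigma_h$ that is dyn-admissible, dyn-consistent and dyn-monotonic (and whose information is only changed by update operations along transitions) such that some run of Dynamic A* with \texttt{reeval} set to false using $h$ reopens a state, i.e., removes a state from Closed. Moreover, in this run, omitting the reopening would cause the algorithm to return a suboptimal solution.
   Context: A transition system is $\mathcal T=\langle S,L,c,T,s_I,S_G\rangle$ with finite states $S$, finite labels $L$, cost function $c:L\to\mathbb R_{\ge0}$, transitions $T\subseteq S\times L\times S$, initial state $s_I$, goal states $S_G\subseteq S$; $h^*(s)$ is the minimal cost of a path from $s$ to a goal ($\infty$ if none). An information source $\sigma$ consists of a set $\mathcal I_\sigma$, $\iota_0^\sigma\in\mathcal I_\sigma$, $\mathrm{update}_\sigma:\mathcal I_\sigma\times T\to\mathcal I_\sigma$, $\mathrm{refine}_\sigma:\mathcal I_\sigma\times S\to\mathcal I_\sigma$. Reachable information: $\iota_n$ is reachable if obtained from $\iota_0^\sigma$ by a sequence of refine steps on states and update steps on transitions $e_1,\dots,e_n$, where each refined state and each origin of an updated transition is $s_I$ or the target of an earlier updated transition. A dynamic heuristic over $\sigma$ is $h:S\times\mathcal I_\sigma\to\mathbb R_{\ge0}\cup\{\infty\}$. It is dyn-admissible if $h(s,\iota)\le h^*(s)$; dyn-consistent if $h(s,\iota)\le c(\ell)+h(s',\iota)$ for all $\langle s,\ell,s'\rangle\in T$; each for all states and all reachable $\iota$; and dyn-monotonic if $h(s,\iota)\le h(s,\mathrm{update}_\sigma(\iota,t))$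 and $h(s,\iota)\le h(s,\mathrm{refine}_\sigma(\iota,s'))$ for all reachable $\iota$, all $s,s'\in S$, all $t\in T$. Parent source $\sigma_p$: $\mathcal I_{\sigma_p}$ = partial functions $S\rightharpoonup\mathbb R_{\ge0}\times(T\cup\{\bot\})$; $\iota_0=\{s_I\mapsto\langle0,\bot\rangle\}$; refine is the identity; $\mathrm{update}(\iota,\langle s,\ell,s'\rangle)$ with $\iota(s)=\langle g,\cdot\rangle$ changes only $s'$, setting it to $\langle g+c(\ell),\langle s,\ell,s'\rangle\rangle$ if $\iota(s')$ is undefined or has $g$-component $\ge g+c(\ell)$, otherwise unchanged. Dynamic A* takes $\mathcal T$, sources $\sigma_p,\sigma_h$, a dynamic heuristic $h$ over $\sigma_h$ and a Boolean flag \texttt{reeval}. Notation: at any moment $g(s)$ is the $g$-component of the current $\mathcal I(\sigma_p)(s)$ and $h(s)$ denotes $h(s,\mathcal I(\sigma_h))$ for the current $\mathcal I(\sigma_h)$. Open is a priority queue of entries $\langle s,g,h\rangle$ (duplicates allowed), popped by minimal stored value $g+h$ (ties arbitrary). Algorithm: 1. $\mathcal I(\sigma):=\iota_0^\sigma$ for both sources; $S_{\mathrm{known}}:=\{s_I\}$; Closed $:=\emptyset$; Open empty. If $h(s_I)<\infty$ insert $\langle s_I,g(s_I),h(s_I)\rangle$. 2. While Open is nonempty: pop an entry $\langle s,\hat g,\hat h\rangle$ of minimal $\hat g+\hat h$. If $s\in$ Closed, continue with the next iteration. Otherwise set $\mathcal I(\sigma):=\mathrm{refine}_\sigma(\mathcal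 I(\sigma),s)$ for both sources. If \texttt{reeval} is true and $\hat h<h(s)$: if $h(s)<\infty$ insert $\langle s,g(s),h(s)\rangle$; continue with the next iteration (this is a re-evaluation). Otherwise add $s$ to Closed ($s$ is expanded). If $s\in S_G$, return the path obtained by following the parent pointers of $\mathcal I(\sigma_p)$ from $s$ back to $s_I$. Otherwise, for each $t=\langle s,\ell,s'\rangle\in T$ in some order: let $old:=g(s')$ if $s'\in S_{\mathrm{known}}$ and undefined otherwise; set $\mathcal I(\sigma):=\mathrm{update}_\sigma(\mathcal I(\sigma),t)$ for both sources; add $s'$ to $S_{\mathrm{known}}$; if $h(s')=\infty$ skip $s'$; else if $old$ is undefined insert $\langle s',g(s'),h(s')\rangle$; else if $old>g(s')$, remove $s'$ from Closed if it is there (reopening) and insert $\langle s',g(s'),h(s')\rangle$. 3. Return ''unsolvable''. *)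

(* Defs.v *)
From mathcomp Require Import all_boot.
From Stdlib Require Import Reals.

Set Implicit Arguments.
Unset Strict Implicit.
Unset Printing Implicit Defensive.

Inductive ext := Fin of R | Inf.

Definition ext_le (x y : ext) : Prop :=
  match x, y with
  | _, Inf => True
  | Inf, Fin _ => False
  | Fin a, Fin b => (a <= b)%R
  end.

Definition ext_lt (x y : ext) : Prop :=
  match x, y with
  | Inf, _ => False
  | Fin _, Inf => True
  | Fin a, Fin b => (a < b)%R
  end.

Definition ext_addR (c : R) (x : ext) : ext :=
  match x with Fin a => Fin (c + a)%R | Inf => Inf end.

Record TS := MkTS {
  St : finType;
  Lab : finType;
  cost : Lab -> R;
  cost_ge0 : forall l, (0 <= cost l)%R;
  Tr : {set (St * Lab * St)};
  sI : St;
  goal : {set St}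
}.

Section DynAstar.
Variable T : TS.

Definition tr := (St T * Lab T * St T)%type.
Definition t_from (t : tr) : St T := t.1.1.
Definition t_lab (t : tr) : Lab T := t.1.2.
Definition t_to (t : tr) : St T := t.2.

Inductive is_path : St T -> seq tr -> St T -> Prop :=
| path_nil s : is_path s [::] s
| path_cons t p s' : t \in @Tr T -> is_path (t_to t) p s' ->
                     is_path (t_from t) (t :: p) s'.

Definition path_cost (p : seq tr) : R :=
  foldr (fun t acc => (@cost T (t_lab t) + acc)%R) 0%R p.

(** is_hstar s v : v = h^*(s), the minimal cost of a path from s to a goal
    state (∞ if there is none). *)
Definition is_hstar (s : St T) (v : ext) : Prop :=
  match v with
  | Inf => forall p g, g \in @goal T -> ~ is_path s p g
  | Fin r =>
      (exists p g, g \in @goal T /\ is_path s p g /\ path_cost p = r) /\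
      (forall p g, g \in @goal T -> is_path s p g -> (r <= path_cost p)%R)
  end.

Record source := MkSource {
  Info : Type;
  info0 : Info;
  src_update : Info -> tr -> Info;
  src_refine : Info -> St T -> Info
}.

(** Reachable information: K lists s_I and the targets of the transitions
    updated so far. *)
Inductive reachable (sg : source) : Info sg -> seq (St T) -> Prop :=
| reach0 : reachable (info0 sg) [:: @sI T]
| reach_ref i K s : reachable i K -> s \in K ->
                    reachable (src_refine i s) K
| reach_upd i K t : reachable i K -> t \in @Tr T -> t_from t \in K ->
                    reachable (src_update i t) (t_to t :: K).

Definition reachable_info (sg : source) (i : Info sg) : Prop :=
  exists K, reachable i K.

Definition heuristic (sg : source) := St T -> Info sg -> ext.

Definition heur_nonneg (sg : source) (h : heuristic sg) : Prop :=
  forall s i, match h s i with Fin r => (0 <= r)%R | Inf => True end.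

Definition dyn_admissible (sg : source) (h : heuristic sg) : Prop :=
  forall s i v, reachable_info i -> is_hstar s v -> ext_le (h s i) v.

Definition dyn_consistent (sg : source) (h : heuristic sg) : Prop :=
  forall t i, t \in @Tr T -> reachable_info i ->
    ext_le (h (t_from t) i) (ext_addR (@cost T (t_lab t)) (h (t_to t) i)).

Definition dyn_monotonic (sg : source) (h : heuristic sg) : Prop :=
  forall i, reachable_info i ->
    (forall s t, t \in @Tr T -> ext_le (h s i) (h s (src_update i t))) /\
    (forall s s', ext_le (h s i) (h s (src_refine i s'))).

(** The information of the source is changed only by update operations:
    refine is the identity. *)
Definition refine_trivial (sg : source) : Prop :=
  forall (i : Info sg) s, src_refine i s = i.

Definition pinfo := St T -> option (R * option tr).

Definition pinfo0 : pinfo :=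
  fun s => if s == @sI T then Some (0%R, None) else None.

Definition pupdate (ip : pinfo) (t : tr) : pinfo :=
  match ip (t_from t) with
  | None => ip
  | Some (g, _) =>
      let ng := (g + @cost T (t_lab t))%R in
      let better :=
        match ip (t_to t) with
        | None => true
        | Some (g', _) => if Rle_dec ng g' then true else false
        end in
      if better then (fun s => if s == t_to t then Some (ng, Some t) else ip s)
      else ip
  end.

Definition prefine (ip : pinfo) (s : St T) : pinfo := ip.

Definition sigma_p : source := MkSource pinfo0 pupdate prefine.

(** g-component of the parent information (only read on defined entries). *)
Definition gof (ip : pinfo) (s : St T) : R :=
  match ip s with Some (g, _) => g | None => 0%R end.

Inductive status := Running | Solved of St T | Unsolvable.

Definition entry := (St T * R * R)%type.   (* <s, g, h> *)
Definition key (e : entry) : R := (e.1.2 + e.2)%R.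

Definition fupd (f : St T -> bool) (x : St T) (b : bool) : St T -> bool :=
  fun y => if y == x then b else f y.

Section Run.
Variable sh : source.
Variable h : heuristic sh.

Record config := MkConfig {
  c_ip : Info sigma_p;
  c_ih : Info sh;
  c_known : St T -> bool;
  c_closed : St T -> bool;
  c_open : seq entry;
  c_status : status
}.

Definition init_config : config :=
  MkConfig (info0 sigma_p) (info0 sh) (fun s => s == @sI T) (fun _ => false)
    (match h (@sI T) (info0 sh) with
     | Fin r => [:: (@sI T, gof (info0 sigma_p) (@sI T), r)]
     | Inf => [::]
     end)
    Running.

(** Processing one outgoing transition t of the expanded state.
    [reopen = true] is Dynamic A*; [reopen = false] is the variant that
    omits the reopening (s' is never removed from Closed). *)
Definition process_succ (reopen : bool) (c : config) (t : tr) : config :=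
  let s' := t_to t in
  let old := if c_known c s' then Some (gof (c_ip c) s') else None in
  let ip := src_update (c_ip c) t in
  let ih := src_update (c_ih c) t in
  let known := fupd (c_known c) s' true in
  let gnew := gof ip s' in
  match h s' ih with
  | Inf => MkConfig ip ih known (c_closed c) (c_open c) (c_status c)
  | Fin hv =>
      match old with
      | None => MkConfig ip ih known (c_closed c)
                  (rcons (c_open c) (s', gnew, hv)) (c_status c)
      | Some o =>
          if Rlt_dec gnew o then
            MkConfig ip ih known
              (if reopen then fupd (c_closed c) s' false else c_closed c)
              (rcons (c_open c) (s', gnew, hv)) (c_status c)
          else MkConfig ip ih known (c_closed c) (c_open c) (c_status c)
      end
  end.

Definition succs (s : St T) : seq tr := [seq t <- enum (@Tr T) | t_from t == s].

Definition is_min_split (c : config) (o1 : seq entry) (e : entry) (o2 : seq entry) :=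
  c_open c = o1 ++ e :: o2 /\
  forall o1' e' o2', c_open c = o1' ++ e' :: o2' -> (key e <= key e')%R.

Inductive step (reeval reopen : bool) : config -> config -> Prop :=
| step_unsolvable c :
    c_status c = Running -> c_open c = [::] ->
    step reeval reopen c
      (MkConfig (c_ip c) (c_ih c) (c_known c) (c_closed c) [::] Unsolvable)
| step_skip c o1 s g hh o2 :
    c_status c = Running -> is_min_split c o1 (s, g, hh) o2 ->
    c_closed c s ->
    step reeval reopen c
      (MkConfig (c_ip c) (c_ih c) (c_known c) (c_closed c) (o1 ++ o2) Running)
| step_reeval c o1 s g hh o2 :
    c_status c = Running -> is_min_split c o1 (s, g, hh) o2 ->
    ~~ c_closed c s ->
    reeval = true ->
    ext_lt (Fin hh) (h s (src_refine (c_ih c) s)) ->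
    let ip1 := src_refine (c_ip c) s in
    let ih1 := src_refine (c_ih c) s in
    step reeval reopen c
      (MkConfig ip1 ih1 (c_known c) (c_closed c)
         (o1 ++ o2 ++ match h s ih1 with
                       | Fin r => [:: (s, gof ip1 s, r)]
                       | Inf => [::]
                       end) Running)
| step_goal c o1 s g hh o2 :
    c_status c = Running -> is_min_split c o1 (s, g, hh) o2 ->
    ~~ c_closed c s ->
    ~ (reeval = true /\ ext_lt (Fin hh) (h s (src_refine (c_ih c) s))) ->
    s \in @goal T ->
    step reeval reopen c
      (MkConfig (src_refine (c_ip c) s) (src_refine (c_ih c) s) (c_known c)
         (fupd (c_closed c) s true) (o1 ++ o2) (Solved s))
| step_expand c o1 s g hh o2 ts :
    c_status c = Running -> is_min_split c o1 (s, g, hh) o2 ->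
    ~~ c_closed c s ->
    ~ (reeval = true /\ ext_lt (Fin hh) (h s (src_refine (c_ih c) s))) ->
    s \notin @goal T ->
    perm_eq ts (succs s) ->
    step reeval reopen c
      (foldl (process_succ reopen)
         (MkConfig (src_refine (c_ip c) s) (src_refine (c_ih c) s) (c_known c)
            (fupd (c_closed c) s true) (o1 ++ o2) Running) ts).

Inductive star (r : config -> config -> Prop) : config -> config -> Prop :=
| star_refl c : star r c c
| star_step c1 c2 c3 : r c1 c2 -> star r c2 c3 -> star r c1 c3.

Definition final (c : config) : Prop := c_status c <> Running.

Definition reopens (c c' : config) : Prop :=
  exists s, c_closed c s /\ ~~ c_closed c' s.

End Run.

Inductive follow (ip : pinfo) : St T -> seq tr -> Prop :=
| follow_init : follow ip (@sI T) [::]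
| follow_step s p t g :
    s <> @sI T -> ip s = Some (g, Some t) -> t_to t = s ->
    follow ip (t_from t) p -> follow ip s (rcons p t).

Definition returns (sh : source) (c : config sh) (p : seq tr) : Prop :=
  exists s, c_status c = Solved s /\ follow (c_ip c) s p.

Definition suboptimal (p : seq tr) : Prop :=
  exists r, is_hstar (@sI T) (Fin r) /\ (r < path_cost p)%R.

End DynAstar.

(* Main.v *)
Require Import Defs.
From mathcomp Require Import all_boot.
From Stdlib Require Import Reals Lra FunctionalExtensionality Classical.

Set Implicit Arguments.
Unset Strict Implicit.

Notation nI := (@Ordinal 5 0 isT).
Notation nA := (@Ordinal 5 1 isT).
Notation nB := (@Ordinal 5 2 isT).
Notation nE := (@Ordinal 5 3 isT).
Notation nG := (@Ordinal 5 4 isT).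
Notation e0 := (@Ordinal 6 0 isT).
Notation e1 := (@Ordinal 6 1 isT).
Notation e2 := (@Ordinal 6 2 isT).
Notation e3 := (@Ordinal 6 3 isT).
Notation e4 := (@Ordinal 6 4 isT).
Notation e5 := (@Ordinal 6 5 isT).

Definition costf (l : 'I_6) : R :=
  match nat_of_ord l with 0 => 5 | 1 => 2 | 2 => 1 | 3 => 10 | 4 => 1 | _ => 13 end%R.
Definition srcf (l : 'I_6) : 'I_5 :=
  match nat_of_ord l with 0 | 1 | 4 => nI | 2 => nB | 3 => nA | _ => nE end.
Definition dstf (l : 'I_6) : 'I_5 :=
  match nat_of_ord l with 0 => nA | 1 => nB | 2 => nA | 4 => nE | _ => nG end.

Lemma costf_ge0 l : (0 <= costf l)%R.
Proof. case: l => [[|[|[|[|[|[|n]]]]]] Hl]; rewrite /costf /=; lra. Qed.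

Definition trset : {set 'I_5 * 'I_6 * 'I_5} :=
  [set t | (t.1.1 == srcf t.1.2) && (t.2 == dstf t.1.2)].

Definition myTS : TS := @MkTS (ordinal 5) (ordinal 6) costf costf_ge0 trset nI [set nG].

Definition hs (s : 'I_5) : R :=
  match nat_of_ord s with 0 => 13 | 1 => 10 | 2 => 11 | 3 => 13 | _ => 0 end%R.

Lemma hs_ge0 s : (0 <= hs s)%R.
Proof. case: s => [[|[|[|[|[|n]]]]] Hl]; rewrite /hs /=; lra. Qed.

Lemma mem_Tr (t : tr myTS) : (t \in @Tr myTS) = (t_from t == srcf (t_lab t)) && (t_to t == dstf (t_lab t)).
Proof. by rewrite /= inE. Qed.

Lemma hs_cons (t : tr myTS) : t \in @Tr myTS ->
  (hs (t_from t) <= costf (t_lab t) + hs (t_to t))%R.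
Proof.
rewrite mem_Tr; case: t => [[a l] b]; rewrite /t_from /t_to /t_lab /= => /andP[/eqP -> /eqP ->].
case: l => [[|[|[|[|[|[|n]]]]]] Hl]; rewrite /hs /costf /srcf /dstf /=; lra.
Qed.

Lemma hs_lb s p g : is_path s p g -> g \in @goal myTS -> (hs s <= path_cost p)%R.
Proof.
elim=> [s0|t p0 s' Ht Hp IH] Hg.
- move: Hg; rewrite /= inE => /eqP ->; rewrite /hs /=; lra.
- have := hs_cons Ht; have := IH Hg; rewrite /=. simpl in *. lra.
Qed.

Definition mysrc : source myTS :=
  @MkSource myTS bool false (fun i t => i || (t_lab t == e1)) (fun i _ => i).

Definition myh : heuristic mysrc := fun s (i : bool) => if i then Fin (hs s) else Fin 0.

Lemma P_nonneg : heur_nonneg myh.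
Proof. move=> s [] /=; [exact: hs_ge0 | lra]. Qed.

Lemma P_adm : dyn_admissible myh.
Proof.
move=> s i [r|] _ Hv; last by case: i.
case: Hv => [[p [g [Hg [Hp <-]]]] _].
have := hs_lb Hp Hg; have := hs_ge0 s.
case: i => /=; lra.
Qed.

Lemma P_cons : dyn_consistent myh.
Proof.
move=> t [] Ht _ /=.
- exact: hs_cons.
- have := costf_ge0 (t_lab t); simpl; lra.
Qed.

Lemma P_mono : dyn_monotonic myh.
Proof.
move=> i _; split.
- move=> s t _; case: i => /=; [lra|]. case: (_ == _) => /=; [exact: hs_ge0 | lra].
- move=> s s'; case: i => /=; lra.
Qed.

Lemma P_ref : refine_trivial mysrc.
Proof. by []. Qed.
Local Notation In := List.In.
Local Notation in_or_app := List.in_or_app.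
Local Notation in_app_or := List.in_app_or.
Notation tIA := ((nI, e0, nA) : tr myTS).
Notation tIB := ((nI, e1, nB) : tr myTS).
Notation tBA := ((nB, e2, nA) : tr myTS).
Notation tAG := ((nA, e3, nG) : tr myTS).
Notation tIE := ((nI, e4, nE) : tr myTS).
Notation tEG := ((nE, e5, nG) : tr myTS).

Lemma split_uniq (A : Type) (x : A) o1 o2 l1 l2 :
  ~ In x l1 -> ~ In x l2 -> o1 ++ x :: o2 = l1 ++ x :: l2 -> o1 = l1 /\ o2 = l2.
Proof.
elim: o1 l1 => [|a o1 IH] [|y l1] /= H1 H2 E.
- by case: E.
- case: E => E _; exfalso; apply: H1; by left.
- case: E => E1 E2; exfalso; apply: H2; rewrite -E2; apply: in_or_app; right; by left.
- case: E => -> E; have [-> ->] := IH l1 (fun h => H1 (or_intror h)) H2 E; done.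
Qed.

Section M.
Variable sh : source myTS.

Lemma min_ok (c : config sh) l1 e0 l2 :
  c_open c = l1 ++ e0 :: l2 -> (forall x, In x (l1 ++ l2) -> (key e0 <= key x)%R) ->
  is_min_split c l1 e0 l2.
Proof.
move=> E H; split => // o1 e o2; rewrite E => E'.
have Hin : In e (l1 ++ e0 :: l2) by rewrite E'; apply: in_or_app; right; left.
case: (in_app_or _ _ _ Hin) => [Hi|[Hi|Hi]].
- apply: H; apply: in_or_app; by left.
- subst; lra.
- apply: H; apply: in_or_app; by right.
Qed.

Lemma min_det (c : config sh) l1 e0 l2 o1 e o2 :
  c_open c = l1 ++ e0 :: l2 -> (forall x, In x (l1 ++ l2) -> (key e0 < key x)%R) ->
  is_min_split c o1 e o2 -> e = e0 /\ o1 = l1 /\ o2 = l2.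
Proof.
move=> E H [E1 Hm].
have Hk := Hm l1 e0 l2 E.
have He : e = e0.
  have Hin : In e (l1 ++ e0 :: l2) by rewrite -E E1; apply: in_or_app; right; left.
  case: (in_app_or _ _ _ Hin) => [Hi|[Hi|Hi]] //.
  + have := H e (in_or_app _ _ _ (or_introl Hi)); lra.
  + have := H e (in_or_app _ _ _ (or_intror Hi)); lra.
subst e; split => //.
apply: (split_uniq (x:=e0)); last (rewrite -E1 E; reflexivity).
- move=> Hi; have := H e0 (in_or_app _ _ _ (or_introl Hi)); lra.
- move=> Hi; have := H e0 (in_or_app _ _ _ (or_intror Hi)); lra.
Qed.
End M.

Lemma mem_succs (s : St myTS) x : (x \in succs s) = (t_from x == s) && (x \in @Tr myTS).
Proof. by rewrite /succs mem_filter mem_enum. Qed.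

Lemma succs_I : perm_eq [:: tIA; tIB; tIE] (@succs myTS nI).
Proof.
apply: uniq_perm => //; first by rewrite /succs filter_uniq // enum_uniq.
move=> [[a l] b]; rewrite mem_succs mem_Tr /t_from /t_to /t_lab /=.
case: a => [[|[|[|[|[|a]]]]] Ha] //; case: l => [[|[|[|[|[|[|l]]]]]] Hl] //;
 case: b => [[|[|[|[|[|b]]]]] Hb] //.
Qed.

Lemma succs_A : perm_eq [:: tAG] (@succs myTS nA).
Proof.
apply: uniq_perm => //; first by rewrite /succs filter_uniq // enum_uniq.
move=> [[a l] b]; rewrite mem_succs mem_Tr /t_from /t_to /t_lab /=.
case: a => [[|[|[|[|[|a]]]]] Ha] //; case: l => [[|[|[|[|[|[|l]]]]]] Hl] //;
 case: b => [[|[|[|[|[|b]]]]] Hb] //.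
Qed.
Lemma succs_B : perm_eq [:: tBA] (@succs myTS nB).
Proof.
apply: uniq_perm => //; first by rewrite /succs filter_uniq // enum_uniq.
move=> [[a l] b]; rewrite mem_succs mem_Tr /t_from /t_to /t_lab /=.
case: a => [[|[|[|[|[|a]]]]] Ha] //; case: l => [[|[|[|[|[|[|l]]]]]] Hl] //;
 case: b => [[|[|[|[|[|b]]]]] Hb] //.
Qed.
Lemma succs_E : perm_eq [:: tEG] (@succs myTS nE).
Proof.
apply: uniq_perm => //; first by rewrite /succs filter_uniq // enum_uniq.
move=> [[a l] b]; rewrite mem_succs mem_Tr /t_from /t_to /t_lab /=.
case: a => [[|[|[|[|[|a]]]]] Ha] //; case: l => [[|[|[|[|[|[|l]]]]]] Hl] //;
 case: b => [[|[|[|[|[|b]]]]] Hb] //.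
Qed.

Lemma perm1 (U : eqType) (ts : seq U) t s : perm_eq [:: t] s -> perm_eq ts s -> ts = [:: t].
Proof.
move=> H1 H2; have H : perm_eq ts [:: t] by rewrite (perm_trans H2) // perm_sym.
have := perm_size H; clear H2; case: ts H => [|a [|b l]] // H _.
by have := perm_mem H a; rewrite !inE eqxx => /esym /eqP ->.
Qed.
Lemma step_conv re ro (c c2 c2' : config mysrc) : step myh re ro c c2 -> c2 = c2' -> step myh re ro c c2'.
Proof. by move=> H <-. Qed.

Definition ip1 : pinfo myTS := fun s =>
  match nat_of_ord s with 0 => Some (0%R, None) | 1 => Some (5%R, Some tIA)
  | 2 => Some (2%R, Some tIB) | 3 => Some (1%R, Some tIE) | _ => None end.
Definition ip2 : pinfo myTS := fun s => if nat_of_ord s == 4 then Some (15%R, Some tAG) else ip1 s.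
Definition ip3 : pinfo myTS := fun s => if nat_of_ord s == 1 then Some (3%R, Some tBA) else ip2 s.
Definition ip4 : pinfo myTS := fun s => if nat_of_ord s == 4 then Some (14%R, Some tEG) else ip3 s.
Definition cA : config mysrc :=
  @MkConfig myTS mysrc ip1 true (fun s => nat_of_ord s != 4) (fun s => nat_of_ord s == 0)
   [:: (nA, 5%R, 0%R); (nB, 2%R, 11%R); (nE, 1%R, 13%R)] (Running myTS).

Ltac ordcase s := case: s => [[|[|[|[|[|?]]]]] ?] //.
Ltac simp := rewrite /gof /pupdate /prefine /pinfo0 /fupd /hs /costf /ip1 /ip2 /ip3 /ip4 /t_from /t_to /t_lab /=.
Ltac decs := repeat match goal with
  | |- context [Rle_dec ?a ?b] => destruct (Rle_dec a b) as [?|Hn]; [|exfalso; rewrite /costf /= in Hn; lra]; simp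
  | |- context [Rlt_dec ?a ?b] => destruct (Rlt_dec a b) as [?|Hn]; [|exfalso; rewrite /costf /= in Hn; lra]; simp end.
Ltac eqs := first [ reflexivity | lra | (f_equal; eqs) ].

Lemma st1 : step myh false true (init_config myh) cA.
Proof.
apply: step_conv.
apply: (@step_expand _ _ myh false true (init_config myh) [::] nI 0%R 0%R [::] [:: tIA; tIB; tIE]) => //.
all: try (apply: min_ok => //= x []).
- by case.
- by rewrite inE.
- exact: succs_I.
rewrite /cA /process_succ /=.
f_equal; try (apply: functional_extensionality => s; ordcase s); simp; simp; decs; eqs.
Qed.

Definition c1 : config mysrc :=
  @MkConfig myTS mysrc ip2 true (fun _ => true) (fun s => nat_of_ord s <= 1)
   [:: (nB, 2%R, 11%R); (nE, 1%R, 13%R); (nG, 15%R, 0%R)] (Running myTS).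
Definition c2r : config mysrc :=
  @MkConfig myTS mysrc ip3 true (fun _ => true) (fun s => (nat_of_ord s == 0) || (nat_of_ord s == 2))
   [:: (nE, 1%R, 13%R); (nG, 15%R, 0%R); (nA, 3%R, 10%R)] (Running myTS).
Definition c2n : config mysrc :=
  @MkConfig myTS mysrc ip3 true (fun _ => true) (fun s => nat_of_ord s <= 2)
   [:: (nE, 1%R, 13%R); (nG, 15%R, 0%R); (nA, 3%R, 10%R)] (Running myTS).
Definition c3n : config mysrc :=
  @MkConfig myTS mysrc ip3 true (fun _ => true) (fun s => nat_of_ord s <= 2)
   [:: (nE, 1%R, 13%R); (nG, 15%R, 0%R)] (Running myTS).
Definition c4n : config mysrc :=
  @MkConfig myTS mysrc ip4 true (fun _ => true) (fun s => nat_of_ord s <= 3)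
   [:: (nG, 15%R, 0%R); (nG, 14%R, 0%R)] (Running myTS).
Definition c5n : config mysrc :=
  @MkConfig myTS mysrc ip4 true (fun _ => true) (fun _ => true)
   [:: (nG, 15%R, 0%R)] (@Solved myTS nG).

Ltac keys := move=> x /=; intuition (subst; rewrite /key /=; lra).

Lemma st2 : step myh false true cA c1.
Proof.
apply: step_conv.
apply: (@step_expand _ _ myh false true cA [::] nA 5%R 0%R _ [:: tAG]) => //.
- apply: min_ok => //; keys.
- by case.
- by rewrite inE.
- exact: succs_A.
rewrite /c1 /process_succ /=.
f_equal; try (apply: functional_extensionality => s; ordcase s); simp; simp; decs; eqs.
Qed.

Lemma st3 ro : step myh false ro c1 (if ro then c2r else c2n).
Proof.
apply: step_conv.
apply: (@step_expand _ _ myh false ro c1 [::] nB 2%R 11%R _ [:: tBA]) => //.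
- apply: min_ok => //; keys.
- by case.
- by rewrite inE.
- exact: succs_B.
rewrite /process_succ /=.
simp; decs.
case: ro; rewrite /c2r /c2n; 
f_equal; try (apply: functional_extensionality => s; ordcase s); simp; simp; decs; eqs.
Qed.

Lemma st4 : step myh false false c2n c3n.
Proof.
apply: step_conv.
apply: (@step_skip _ _ myh false false c2n [:: (nE, 1%R, 13%R); (nG, 15%R, 0%R)] nA 3%R 10%R [::]) => //.
- apply: min_ok => //; keys.
- by [].
Qed.

Lemma st5 : step myh false false c3n c4n.
Proof.
apply: step_conv.
apply: (@step_expand _ _ myh false false c3n [::] nE 1%R 13%R _ [:: tEG]) => //.
- apply: min_ok => //; keys.
- by case.
- by rewrite inE.
- exact: succs_E.
rewrite /process_succ /=.
simp; decs.
rewrite /c4n;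
f_equal; try (apply: functional_extensionality => s; ordcase s); simp; simp; decs; eqs.
Qed.

Lemma st6 : step myh false false c4n c5n.
Proof.
apply: step_conv.
apply: (@step_goal _ _ myh false false c4n [:: (nG, 15%R, 0%R)] nG 14%R 0%R [::]) => //.
- apply: min_ok => //; keys.
- by case.
- by rewrite inE.
rewrite /c5n /=.
f_equal; try (apply: functional_extensionality => s; ordcase s); simp; simp; decs; eqs.
Qed.

Lemma step_inv re ro (c c' : config mysrc) : step myh re ro c c' ->
  c_status c = Running myTS /\
  ((c_open c = [::] /\ c' = MkConfig (c_ip c) (c_ih c) (c_known c) (c_closed c) [::] (Unsolvable myTS)) \/
   exists o1 s g hh o2, is_min_split c o1 (s,g,hh) o2 /\
    ((c_closed c s /\ c' = MkConfig (c_ip c) (c_ih c) (c_known c) (c_closed c) (o1 ++ o2) (Running myTS))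
     \/ re = true
     \/ (~~ c_closed c s /\ s \in @goal myTS /\
         c' = MkConfig (src_refine (c_ip c) s) (src_refine (c_ih c) s) (c_known c)
           (fupd (c_closed c) s true) (o1 ++ o2) (Solved s))
     \/ (~~ c_closed c s /\ s \notin @goal myTS /\ exists ts, perm_eq ts (succs s) /\
         c' = foldl (process_succ myh ro)
         (MkConfig (src_refine (c_ip c) s) (src_refine (c_ih c) s) (c_known c)
            (fupd (c_closed c) s true) (o1 ++ o2) (Running myTS)) ts))).
Proof.
case.
- move=> c0 H1 H2; split => //; left; done.
- move=> c0 o1 s g hh o2 H1 H2 H3; split => //; right; exists o1, s, g, hh, o2; split => //; left; done.
- move=> c0 o1 s g hh o2 H1 H2 H3 H4 H5; split => //; right; exists o1, s, g, hh, o2; split => //; right; left; done.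
- move=> c0 o1 s g hh o2 H1 H2 H3 H4 H5; split => //; right; exists o1, s, g, hh, o2; split => //; right; right; left; done.
- move=> c0 o1 s g hh o2 ts H1 H2 H3 H4 H5 H6; split => //; right; exists o1, s, g, hh, o2; split => //; right; right; right; split => //; split => //; exists ts; done.
Qed.

Lemma det1 c' : step myh false false c1 c' -> c' = c2n.
Proof.
move/step_inv => [_ [[Ho _]|[o1 [s [g [hh [o2 [Hm H]]]]]]]]; first discriminate.
have [Ee [E1 E2]] := @min_det _ c1 [::] (nB, 2%R, 11%R) [:: (nE, 1%R, 13%R); (nG, 15%R, 0%R)] _ _ _ erefl ltac:(keys) Hm.
case: Ee => ? ? ?; subst.
case: H => [[H _]|[H|[[_ [H _]]|[_ [_ [ts [Hts ->]]]]]]] //.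
- by move: H; rewrite inE.
rewrite (perm1 succs_B Hts).
rewrite /process_succ /=.
simp; decs.
rewrite /c2n;
f_equal; try (apply: functional_extensionality => s; ordcase s); simp; simp; decs; eqs.
Qed.

Lemma det2 c' : step myh false false c2n c' -> c' = c3n.
Proof.
move/step_inv => [_ [[Ho _]|[o1 [s [g [hh [o2 [Hm H]]]]]]]]; first discriminate.
have [Ee [E1 E2]] := @min_det _ c2n [:: (nE, 1%R, 13%R); (nG, 15%R, 0%R)] (nA, 3%R, 10%R) [::] _ _ _ erefl ltac:(keys) Hm.
case: Ee => ? ? ?; subst.
by case: H => [[H ->]|[H|[[H _]|[H _]]]].
Qed.

Lemma det3 c' : step myh false false c3n c' -> c' = c4n.
Proof.
move/step_inv => [_ [[Ho _]|[o1 [s [g [hh [o2 [Hm H]]]]]]]]; first discriminate.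
have [Ee [E1 E2]] := @min_det _ c3n [::] (nE, 1%R, 13%R) [:: (nG, 15%R, 0%R)] _ _ _ erefl ltac:(keys) Hm.
case: Ee => ? ? ?; subst.
case: H => [[H _]|[H|[[_ [H _]]|[_ [_ [ts [Hts ->]]]]]]] //.
- by move: H; rewrite inE.
rewrite (perm1 succs_E Hts).
rewrite /process_succ /=.
simp; decs.
rewrite /c4n;
f_equal; try (apply: functional_extensionality => s; ordcase s); simp; simp; decs; eqs.
Qed.

Lemma det4 c' : step myh false false c4n c' -> c' = c5n.
Proof.
move/step_inv => [_ [[Ho _]|[o1 [s [g [hh [o2 [Hm H]]]]]]]]; first discriminate.
have [Ee [E1 E2]] := @min_det _ c4n [:: (nG, 15%R, 0%R)] (nG, 14%R, 0%R) [::] _ _ _ erefl ltac:(keys) Hm.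
case: Ee => ? ? ?; subst.
case: H => [[H _]|[H|[[_ [_ ->]]|[_ [H _]]]]] //.
- rewrite /c5n /=.
  f_equal; try (apply: functional_extensionality => s; ordcase s); simp; simp; decs; eqs.
- by move: H; rewrite inE.
Qed.

Lemma det5 c' : ~ step myh false false c5n c'.
Proof. by move/step_inv => [H _]. Qed.

Lemma star_inv (r : config mysrc -> config mysrc -> Prop) c c3 :
  star r c c3 -> c3 = c \/ exists c2, r c c2 /\ star r c2 c3.
Proof. case => [c0|x y z H1 H2]; [by left | right; by exists y]. Qed.

Lemma final_all c3 : star (step myh false false) c1 c3 -> final c3 ->
  exists p, returns c3 p /\ suboptimal p.
Proof.
move=> Hs Hf.
case: (star_inv Hs) => [E|[y [Hy Hs1]]]; first by subst; exfalso; apply: Hf.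
rewrite (det1 Hy) in Hs1.
case: (star_inv Hs1) => [E|[y2 [Hy2 Hs2]]]; first by subst; exfalso; apply: Hf.
rewrite (det2 Hy2) in Hs2.
case: (star_inv Hs2) => [E|[y3 [Hy3 Hs3]]]; first by subst; exfalso; apply: Hf.
rewrite (det3 Hy3) in Hs3.
case: (star_inv Hs3) => [E|[y4 [Hy4 Hs4]]]; first by subst; exfalso; apply: Hf.
rewrite (det4 Hy4) in Hs4.
case: (star_inv Hs4) => [->|[y5 [Hy5 Hs5]]]; last by case: (det5 Hy5).
exists [:: tIE; tEG]; split.
- exists nG; split => //.
  apply: (@follow_step myTS ip4 nG [:: tIE] tEG 14%R) => //.
  apply: (@follow_step myTS ip4 nE [::] tIE 1%R) => //.
  exact: follow_init.
- exists 13%R; split.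
  + split.
    * exists [:: tIB; tBA; tAG], nG; split; first by rewrite inE.
      split; last by rewrite /path_cost /= /costf /=; lra.
      have H3 : is_path (T:=myTS) nA [:: tAG] nG.
        by apply: (@path_cons myTS tAG (nil) nG) ; [by rewrite mem_Tr | exact: (@path_nil myTS nG)].
      have H2 : is_path (T:=myTS) nB [:: tBA; tAG] nG.
        by apply: (@path_cons myTS tBA [:: tAG] nG) => //; rewrite mem_Tr.
      by apply: (@path_cons myTS tIB [:: tBA; tAG] nG) => //; rewrite mem_Tr.
    * move=> p g Hg Hp; exact: (hs_lb Hp Hg).
  + rewrite /path_cost /= /costf /=; lra.
Qed.

Theorem mainTheorem14 :
  exists (T : TS) (sh : source T) (h : heuristic sh),
    heur_nonneg h /\ dyn_admissible h /\ dyn_consistent h /\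
    dyn_monotonic h /\ refine_trivial sh /\
    exists c1 c2 : config sh,
      (* a run of Dynamic A* (reeval = false) reaches c1 ... *)
      star (step h false true) (init_config h) c1 /\
      (* ... and its next iteration reopens a state *)
      step h false true c1 c2 /\ reopens c1 c2 /\
      (* omitting the reopening from c1 on: the algorithm terminates, and
         every way it terminates returns a suboptimal solution *)
      (exists c3, star (step h false false) c1 c3 /\ final c3) /\
      (forall c3, star (step h false false) c1 c3 -> final c3 ->
         exists p, returns c3 p /\ suboptimal p).
Proof.
exists myTS, mysrc, myh.
split; first exact: P_nonneg.
split; first exact: P_adm.
split; first exact: P_cons.
split; first exact: P_mono.
split; first exact: P_ref.
exists c1, c2r.
split; first exact: (star_step st1 (star_step st2 (star_refl _ _))).
split; first exact: (st3 true).
split; first by exists nA.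
split; last exact: final_all.
exists c5n; split; last by [].
exact: (star_step (st3 false) (star_step st4 (star_step st5 (star_step st6 (star_refl _ _))))).
Qed.
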